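(* If $S$ is a nilpotent right loop, then its group torsion $G_S$ is a solvable group.
   Context: A right loop is a set $S$ with binary operation $\circ$ and two-sided identity $1$ such that each equation $X\circ a=b$ has a unique solution. For $y,z\in S$, $f^S(y,z):S\to S$ sends $x$ to the unique $X$ with $X\circ(y\circ z)=(x\circ y)\circ z$; the group torsion $G_S\le\mathrm{Sym}(S)$ is generated by all $f^S(y,z)$. A congruence is an equivalence relation which is a right subloop of $S\times S$; an invariant right subloop is the class $T$ of $1$ under a congruence, $S/T=\{T\circ x\}$ with $(T\circ x)\circ(T\circ y)=T\circ(x\circ y)$. For congruences $\beta,\gamma$, $\gamma$ centralizes $\beta$ if there is a congruence $(\gamma|\beta)$ on the right loop $\beta\subseteq S\times S$ with: (i) $(x,y)(\gamma|\beta)(u,v)\Rightarrow x\gamma u$; (ii) for $(x,y)\in\beta$, $(u,v)\mapsto u$ is a bijection from the $(\gamma|\beta)$-class of $(x,y)$ to the $\gamma$-class of $x$; (iii) $(x,y)\in\gamma\Rightarrow(x,x)(\gamma|\beta)(y,y)$; (iv) $(x,y)(\gamma|\beta)(u,v)\Rightarrow(y,x)(\gamma|\beta)(v,u)$; (v) $(x,y)(\gamma|\beta)(u,v)$, $(y,z)(\gamma|\beta)(v,w)\Rightarrow(x,z)(\gamma|\beta)(u,w)$. The center $\mathcal Z(S)$ is the class of $1$ under the unique maximal congruence centralized by $S\times S$. $S$ is nilpotent if the series $\mathcal Z_0=\{1\}$, $\mathcal Z_1=\mathcal Z(S)$, $\mathcal Z_{i+1}/\mathcal Z_i=\mathcal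 Z(S/\mathcal Z_i)$ reaches $\mathcal Z_n=S$ for some $n$. *)

(* Defs.v *)
(* Right loops may be infinite, so everything is stated for an
   arbitrary carrier type, with subgroups of Sym(S) represented as predicates
   on functions S -> S. *)
From Stdlib Require Import IndefiniteDescription.

Set Implicit Arguments.

Record magma := Magma {
  carrier :> Type;
  mop : carrier -> carrier -> carrier;
  munit : carrier
}.
Arguments mop {m} _ _.
Arguments munit {m}.

Definition is_right_loop (M : magma) : Prop :=
  (forall x : M, mop munit x = x /\ mop x munit = x) /\
  (forall a b : M, exists! X : M, mop X a = b).

Definition prodM (M N : magma) : magma :=
  {| carrier := (M * N)%type;
     mop := fun p q => (mop (fst p) (fst q), mop (snd p) (snd q));
     munit := (munit, munit) |}.

(* C is a congruence of the right subloop P of M: an equivalence relation on P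
   which (as a subset of P x P inside M x M) contains (1,1) and is closed under
   the operation and under right division (solutions of X o a = b). *)
Definition congruence_on (M : magma) (P : M -> Prop) (C : M -> M -> Prop) : Prop :=
  (forall x y, C x y -> P x /\ P y) /\
  (forall x, P x -> C x x) /\
  (forall x y, C x y -> C y x) /\
  (forall x y z, C x y -> C y z -> C x z) /\
  C munit munit /\
  (forall a a' b b', C a a' -> C b b' -> C (mop a b) (mop a' b')) /\
  (forall a a' b b' X X', C a a' -> C b b' ->
       mop X a = b -> mop X' a' = b' -> C X X').

Definition congruence (M : magma) (C : M -> M -> Prop) : Prop :=
  @congruence_on M (fun _ => True) C.

(* gamma centralizes beta (conditions (i)-(v)); (gamma|beta) is a congruence
   on the right loop beta, a right subloop of S x S. *)
Definition centralizes (M : magma) (gamma beta : M -> M -> Prop) : Prop :=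
  exists D : prodM M M -> prodM M M -> Prop,
    @congruence_on (prodM M M) (fun p => beta (fst p) (snd p)) D /\
    (forall x y u v, D (x, y) (u, v) -> gamma x u) /\
    (* (ii) (u,v) |-> u is a bijection from the D-class of (x,y) onto the
       gamma-class of x (well-definedness is (i)) *)
    (forall x y, beta x y ->
       (forall p q, D (x, y) p -> D (x, y) q -> fst p = fst q -> p = q) /\
       (forall u, gamma x u -> exists v, D (x, y) (u, v))) /\
    (forall x y, gamma x y -> D (x, x) (y, y)) /\
    (forall x y u v, D (x, y) (u, v) -> D (y, x) (v, u)) /\
    (forall x y z u v w, D (x, y) (u, v) -> D (y, z) (v, w) -> D (x, z) (u, w)).

Definition is_center_congruence (M : magma) (zeta : M -> M -> Prop) : Prop :=
  @congruence M zeta /\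
  @centralizes M (fun _ _ => True) zeta /\
  (forall beta : M -> M -> Prop, @congruence M beta ->
     @centralizes M (fun _ _ => True) beta ->
     forall x y, beta x y -> zeta x y).

Definition qcarrier (M : magma) (C : M -> M -> Prop) : Type :=
  { P : M -> Prop | exists x, P = C x }.

Definition qcls (M : magma) (C : M -> M -> Prop) (x : M) : @qcarrier M C :=
  exist (fun P => exists x, P = C x) (C x) (ex_intro _ x eq_refl).

Definition qrep (M : magma) (C : M -> M -> Prop) (p : @qcarrier M C) : M :=
  proj1_sig (constructive_indefinite_description _ (proj2_sig p)).

Definition quotM (M : magma) (C : M -> M -> Prop) : magma :=
  {| carrier := @qcarrier M C;
     mop := fun p q => @qcls M C (mop (@qrep M C p) (@qrep M C q));
     munit := @qcls M C munit |}.

(* Nilpotency, via the congruences alpha i whose classes of 1 are Z_i: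
   alpha 0 is equality (Z_0 = {1}); Z_{i+1}/Z_i = Z(S/Z_i), i.e. alpha (i+1)
   is the preimage of the center congruence of S/alpha i; and Z_n = S. *)
Definition nilpotent (M : magma) : Prop :=
  exists (n : nat) (alpha : nat -> M -> M -> Prop)
         (zeta : forall i, @quotM M (alpha i) -> @quotM M (alpha i) -> Prop),
    (forall x y, alpha 0 x y <-> x = y) /\
    (forall i, i < n ->
       @is_center_congruence (@quotM M (alpha i)) (zeta i) /\
       (forall x y, alpha (S i) x y <-> zeta i (@qcls M (alpha i) x) (@qcls M (alpha i) y))) /\
    (forall x y, alpha n x y).

Inductive gen_perm (T : Type) (A : (T -> T) -> Prop) : (T -> T) -> Prop :=
  | gen_in : forall f, A f -> gen_perm A f
  | gen_id : gen_perm A (fun x => x)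
  | gen_comp : forall f g, gen_perm A f -> gen_perm A g ->
               gen_perm A (fun x => f (g x))
  | gen_inv : forall f g, gen_perm A f ->
               (forall x, g (f x) = x) -> (forall x, f (g x) = x) ->
               gen_perm A g.

Definition commutator_subgroup (T : Type) (H : (T -> T) -> Prop) : (T -> T) -> Prop :=
  gen_perm (fun c => exists g h g' h', H g /\ H h /\
      (forall x, g' (g x) = x) /\ (forall x, g (g' x) = x) /\
      (forall x, h' (h x) = x) /\ (forall x, h (h' x) = x) /\
      c = (fun x => g' (h' (g (h x))))).

Fixpoint derived (T : Type) (G : (T -> T) -> Prop) (k : nat) : (T -> T) -> Prop :=
  match k with
  | 0 => G
  | S k => commutator_subgroup (derived G k)
  end.

Definition solvable_perm_group (T : Type) (G : (T -> T) -> Prop) : Prop :=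
  exists n, forall g, derived G n g -> forall x, g x = x.

Definition is_torsion_map (M : magma) (y z : M) (f : M -> M) : Prop :=
  forall x, mop (f x) (mop y z) = mop (mop x y) z.

Definition group_torsion (M : magma) : (M -> M) -> Prop :=
  gen_perm (fun f => exists y z : M, @is_torsion_map M y z f).

(* Main.v *)
Require Import Defs.
From Stdlib Require Import IndefiniteDescription FunctionalExtensionality PropExtensionality ProofIrrelevance Lia Arith.

Lemma prod_mop (M N : magma) (a c : M) (b d : N) :
  @mop (prodM M N) (a, b) (c, d) = (mop a c, mop b d).
Proof. reflexivity. Qed.

Definition core_hyp (Q : magma) (ze : Q -> Q -> Prop)
  (D : prodM Q Q -> prodM Q Q -> Prop) : Prop :=
  (forall x : Q, mop munit x = x) /\ (forall x : Q, mop x munit = x) /\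
  @congruence_on (prodM Q Q) (fun p => ze (fst p) (snd p)) D /\
  (forall x y : Q, ze x y ->
     (forall p q : prodM Q Q, D (x, y) p -> D (x, y) q -> fst p = fst q -> p = q) /\
     (forall u : Q, exists v, D (x, y) (u, v))) /\
  (forall x y : Q, D (x, x) (y, y)).

Section Core.
Context (Q : magma) (ze : Q -> Q -> Prop) (D : prodM Q Q -> prodM Q Q -> Prop)
        (H : core_hyp Q ze D).

Lemma c_uniq (x y : Q) (p q : prodM Q Q) :
  D (x, y) p -> D (x, y) q -> fst p = fst q -> p = q.
Proof.
  intros H1 H2 H3. destruct H as (_&_&Dc&D2&_).
  destruct Dc as (Dp&_).
  destruct (Dp _ _ H1) as [Hz _]. simpl in Hz.
  exact (proj1 (D2 x y Hz) p q H1 H2 H3).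
Qed.

Lemma c1 (a x : Q) : ze munit a -> D (munit, a) (x, mop x a).
Proof.
  intros Ha. pose proof H as (lid&rid&Dc&D2&D3).
  destruct Dc as (Dp&Dr&Ds&Dt&D11&Dop&Ddiv).
  pose proof (Dop (@munit Q, @munit Q) (x, x) (@munit Q, a) (@munit Q, a)
     (D3 munit x) (Dr (@munit Q, a) Ha)) as E.
  rewrite prod_mop, prod_mop, !lid, rid in E. exact E.
Qed.

Lemma c2 (a y : Q) : ze munit a -> mop a y = mop y a.
Proof.
  intros Ha. pose proof (c1 a y Ha) as E1. pose proof H as (lid&rid&Dc&D2&D3).
  destruct Dc as (Dp&Dr&Ds&Dt&D11&Dop&Ddiv).
  pose proof (Dop (@munit Q, a) (@munit Q, a) (@munit Q, @munit Q) (y, y)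
     (Dr (@munit Q, a) Ha) (D3 munit y)) as E2.
  rewrite prod_mop, prod_mop, ?lid, ?rid in E2.
  pose proof (c_uniq _ _ _ _ E2 E1 eq_refl) as E3. injection E3; auto.
Qed.

Lemma c3 (a y z : Q) : ze munit a -> mop (mop a y) z = mop a (mop y z).
Proof.
  intros Ha. pose proof (c1 a y Ha) as E1. rewrite <- (c2 a y Ha) in E1.
  pose proof H as (lid&rid&Dc&D2&D3).
  destruct Dc as (Dp&Dr&Ds&Dt&D11&Dop&Ddiv).
  pose proof (Dop _ _ (@munit Q, @munit Q) (z, z) E1 (D3 munit z)) as E2.
  rewrite prod_mop, prod_mop, ?rid in E2.
  pose proof (c1 a (mop y z) Ha) as E3. rewrite <- (c2 a (mop y z) Ha) in E3.
  pose proof (c_uniq _ _ _ _ E2 E3 eq_refl) as E4. injection E4; auto.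
Qed.

Lemma c4 (a c x : Q) : ze munit a -> ze munit c ->
  mop (mop x c) a = mop (mop x a) c.
Proof.
  intros Ha Hc. pose proof H as (lid&rid&Dc&D2&D3).
  destruct Dc as (Dp&Dr&Ds&Dt&D11&Dop&Ddiv).
  pose proof (Dop _ _ (@munit Q, a) (@munit Q, a) (c1 c x Hc) (Dr (@munit Q, a) Ha)) as E1.
  pose proof (Dop _ _ (@munit Q, c) (@munit Q, c) (c1 a x Ha) (Dr (@munit Q, c) Hc)) as E2.
  rewrite prod_mop, prod_mop, ?rid in E1, E2.
  rewrite (c2 c a Hc) in E1.
  pose proof (c_uniq _ _ _ _ E1 E2 eq_refl) as E4. injection E4; auto.
Qed.

Lemma c6 (x y : Q) : ze x y -> exists c, ze munit c /\ y = mop x c.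
Proof.
  intros Hxy. pose proof H as (lid&rid&Dc&D2&D3).
  destruct Dc as (Dp&Dr&Ds&Dt&D11&Dop&Ddiv).
  destruct (proj2 (D2 x y Hxy) munit) as [v Hv].
  pose proof (Ds _ _ Hv) as Hs.
  destruct (Dp _ _ Hs) as [Hz _]. simpl in Hz.
  pose proof (c1 v x Hz) as E.
  pose proof (c_uniq _ _ _ _ Hs E eq_refl) as E2. injection E2; eauto.
Qed.

Definition cgood (phi : Q -> Q) : Prop :=
  phi munit = munit /\
  (forall p q : prodM Q Q, D p q -> D (phi (fst p), phi (snd p)) (phi (fst q), phi (snd q))) /\
  (forall a, ze munit a -> phi a = a) /\
  (forall x, ze x (phi x)).

Lemma c5 phi (Hg : cgood phi) (a x : Q) : ze munit a -> phi (mop x a) = mop (phi x) a.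
Proof.
  intros Ha. destruct Hg as (H1&HP&HZ&_).
  pose proof (HP _ _ (c1 a x Ha)) as E. cbn [fst snd] in E.
  rewrite H1, (HZ a Ha) in E.
  pose proof (c1 a (phi x) Ha) as E2.
  pose proof (c_uniq _ _ _ _ E E2 eq_refl) as E3. injection E3; auto.
Qed.

Lemma c_comm phi psi : cgood phi -> cgood psi -> forall x, phi (psi x) = psi (phi x).
Proof.
  intros Hf Hp x.
  destruct (c6 x (psi x) (proj2 (proj2 (proj2 Hp)) x)) as [c [Hc Ep]].
  destruct (c6 x (phi x) (proj2 (proj2 (proj2 Hf)) x)) as [d [Hd Ef]].
  rewrite Ep, Ef. rewrite (c5 phi Hf c x Hc), (c5 psi Hp d x Hd).
  rewrite Ep, Ef. apply c4; auto.
Qed.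

End Core.
Arguments c3 {Q ze D} H a y z _.
Arguments cgood {Q} ze D phi.
Arguments c_comm {Q ze D} H phi psi _ _ x.


Section Cong.
Context {M : magma} {C : M -> M -> Prop} (HC : @congruence M C).

Lemma cg_refl x : C x x.
Proof. destruct HC as (_&r&_). exact (r x I). Qed.
Lemma cg_sym x y : C x y -> C y x.
Proof. destruct HC as (_&_&s&_). exact (s x y). Qed.
Lemma cg_trans x y z : C x y -> C y z -> C x z.
Proof. destruct HC as (_&_&_&t&_). exact (t x y z). Qed.
Lemma cg_op a a' b b' : C a a' -> C b b' -> C (mop a b) (mop a' b').
Proof. destruct HC as (_&_&_&_&_&o&_). exact (o a a' b b'). Qed.
Lemma cg_div a a' b b' X X' : C a a' -> C b b' -> mop X a = b -> mop X' a' = b' -> C X X'.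
Proof. destruct HC as (_&_&_&_&_&_&d). exact (d a a' b b' X X'). Qed.

Lemma exist_eq_P (P P' : M -> Prop) h h' :
  P = P' -> exist (fun P => exists x, P = C x) P h = exist (fun P => exists x, P = C x) P' h'.
Proof. intros ->. f_equal. apply proof_irrelevance. Qed.

Lemma Q1 x y : @qcls M C x = @qcls M C y <-> C x y.
Proof.
  split.
  - intro E. apply (f_equal (@proj1_sig _ _)) in E. simpl in E.
    pose proof (cg_refl y) as Hy. rewrite <- E in Hy. exact Hy.
  - intro Hxy. unfold qcls. apply exist_eq_P.
    extensionality z. apply propositional_extensionality. split; intro Hz.
    + apply (cg_trans y x z); [apply cg_sym; exact Hxy | exact Hz].
    + apply (cg_trans x y z); assumption.
Qed.

Lemma Q2 (p : @qcarrier M C) : @qcls M C (qrep p) = p.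
Proof.
  destruct p as [P h]. unfold qrep. simpl.
  destruct (constructive_indefinite_description _ h) as [r Hr]. simpl.
  unfold qcls. apply exist_eq_P. symmetry. exact Hr.
Qed.

Lemma qsurj (p : @qcarrier M C) : exists x, p = @qcls M C x.
Proof. exists (qrep p). symmetry. apply Q2. Qed.

Lemma Q3 x : C (qrep (@qcls M C x)) x.
Proof. apply Q1. apply Q2. Qed.

Lemma Q4 x y : @mop (quotM M C) (@qcls M C x) (@qcls M C y) = @qcls M C (mop x y).
Proof.
  change (@qcls M C (mop (qrep (@qcls M C x)) (qrep (@qcls M C y))) = @qcls M C (mop x y)).
  apply Q1. apply cg_op; apply Q3.
Qed.

Lemma Qunit : @munit (quotM M C) = @qcls M C munit.
Proof. reflexivity. Qed.

End Cong.

Definition Good (M : magma) (C : M -> M -> Prop) (ze : quotM M C -> quotM M C -> Prop)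
  (D : prodM (quotM M C) (quotM M C) -> prodM (quotM M C) (quotM M C) -> Prop)
  (g : M -> M) : Prop :=
  (forall x y, C x y <-> C (g x) (g y)) /\ C (g munit) munit /\
  (forall a, ze (@qcls M C munit) (@qcls M C a) -> C (g a) a) /\
  (forall x x' u u', D (@qcls M C x, @qcls M C x') (@qcls M C u, @qcls M C u') <->
        D (@qcls M C (g x), @qcls M C (g x')) (@qcls M C (g u), @qcls M C (g u'))).

Arguments Good {M C} ze D g.

Section GoodS.
Context {M : magma} {C : M -> M -> Prop} (HC : @congruence M C)
  (ze : quotM M C -> quotM M C -> Prop)
  (D : prodM (quotM M C) (quotM M C) -> prodM (quotM M C) (quotM M C) -> Prop).

Lemma Good_id : Good ze D (fun x => x).
Proof.
  repeat split; intros; try assumption; apply (cg_refl HC).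
Qed.

Lemma Good_comp f g : Good ze D f -> Good ze D g -> Good ze D (fun x => f (g x)).
Proof.
  intros (Rf&Uf&Zf&Df) (Rg&Ug&Zg&Dg). repeat split.
  - intro Hc. apply (proj1 (Rf _ _)), (proj1 (Rg _ _)), Hc.
  - intro Hc. apply (proj2 (Rg _ _)), (proj2 (Rf _ _)), Hc.
  - apply (cg_trans HC _ (f munit)); [apply (proj1 (Rf _ _)), Ug | apply Uf].
  - intros a Ha. apply (cg_trans HC _ (f a)); [apply (proj1 (Rf _ _)), Zg, Ha | apply Zf, Ha].
  - intro Hd. apply (proj1 (Df _ _ _ _)), (proj1 (Dg _ _ _ _)), Hd.
  - intro Hd. apply (proj2 (Dg _ _ _ _)), (proj2 (Df _ _ _ _)), Hd.
Qed.

Lemma Good_inv f g : Good ze D f -> (forall x, g (f x) = x) -> (forall x, f (g x) = x) ->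
  Good ze D g.
Proof.
  intros (Rf&Uf&Zf&Df) E1 E2. repeat split.
  - intro Hc. apply (proj2 (Rf _ _)). rewrite !E2. exact Hc.
  - intro Hc. apply (proj1 (Rf _ _)) in Hc. rewrite !E2 in Hc. exact Hc.
  - apply (proj2 (Rf _ _)). rewrite E2. apply (cg_sym HC); auto.
  - intros a Ha. apply (proj2 (Rf _ _)). rewrite E2. apply (cg_sym HC); auto.
  - intro Hd. apply (proj2 (Df _ _ _ _)). rewrite !E2. exact Hd.
  - intro Hd. apply (proj1 (Df _ _ _ _)) in Hd. rewrite !E2 in Hd. exact Hd.
Qed.

Lemma Good_gen (A : (M -> M) -> Prop) : (forall f, A f -> Good ze D f) ->
  forall g, gen_perm A g -> Good ze D g.
Proof.
  intros HA g Hg. induction Hg.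
  - auto.
  - apply Good_id.
  - apply Good_comp; auto.
  - eapply Good_inv; eauto.
Qed.

Lemma Good_tors (RL : is_right_loop M) (Hz : @congruence (quotM M C) ze)
  (Hcore : core_hyp _ ze D) y z f :
  @is_torsion_map M y z f -> Good ze D f.
Proof.
  intro Ht. unfold is_torsion_map in Ht.
  destruct RL as [Hid _].
  pose proof Hcore as (lid&rid&Dc&D2&D3).
  destruct Dc as (Dp&Dr&Ds&Dt&D11&Dop&Ddiv).
  assert (Zr : forall p, ze p p) by (intro; apply cg_refl; exact Hz).
  assert (Drr : forall p, D (p, p) (p, p)) by (intro p; exact (Dr (p, p) (Zr p))).
  repeat split.
  - intro Hc. apply (cg_div HC (mop y z) (mop y z) (mop (f x) (mop y z)) (mop (f y0) (mop y z)));
      try reflexivity; [apply cg_refl; exact HC|].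
    rewrite !Ht. apply cg_op; [exact HC| |apply cg_refl; exact HC].
    apply cg_op; [exact HC|exact Hc|apply cg_refl; exact HC].
  - intro Hc.
    assert (C (mop (mop x y) z) (mop (mop y0 y) z)) as H1.
    { rewrite <- !Ht. apply cg_op; [exact HC|exact Hc|apply cg_refl; exact HC]. }
    assert (C (mop x y) (mop y0 y)) as H2.
    { apply (cg_div HC z z _ _ _ _ (cg_refl HC z) H1); reflexivity. }
    apply (cg_div HC y y _ _ _ _ (cg_refl HC y) H2); reflexivity.
  - apply (cg_div HC (mop y z) (mop y z) (mop y z) (mop y z)); try apply cg_refl; try exact HC.
    + rewrite Ht. rewrite (proj1 (Hid y)). reflexivity.
    + apply (proj1 (Hid _)).
  - intros a Ha.
    pose proof (c3 Hcore (@qcls M C a) (@qcls M C y) (@qcls M C z) Ha) as E.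
    rewrite !(Q4 HC) in E. apply (Q1 HC) in E. rewrite <- Ht in E.
    apply (cg_div HC (mop y z) (mop y z) _ _ _ _ (cg_refl HC _) E); reflexivity.
  - intro Hd.
    pose proof (Dop _ _ _ _ Hd (Dr (@qcls M C y, @qcls M C y) (Zr _))) as E1.
    rewrite !prod_mop, !(Q4 HC) in E1.
    pose proof (Dop _ _ _ _ E1 (Dr (@qcls M C z, @qcls M C z) (Zr _))) as E2.
    rewrite !prod_mop, !(Q4 HC) in E2.
    rewrite <- !Ht in E2.
    apply (Ddiv (@qcls M C (mop y z), @qcls M C (mop y z)) (@qcls M C (mop y z), @qcls M C (mop y z))
             _ _ _ _ (Drr _) E2); rewrite prod_mop, !(Q4 HC); reflexivity.
  - intro Hd.
    pose proof (Dop _ _ _ _ Hd (Dr (@qcls M C (mop y z), @qcls M C (mop y z)) (Zr _))) as E1.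
    rewrite !prod_mop, !(Q4 HC) in E1. rewrite !Ht in E1.
    assert (E2 : D (@qcls M C (mop x y), @qcls M C (mop x' y)) (@qcls M C (mop u y), @qcls M C (mop u' y))).
    { apply (Ddiv (@qcls M C z, @qcls M C z) (@qcls M C z, @qcls M C z)
             _ _ _ _ (Drr _) E1); rewrite prod_mop, !(Q4 HC); reflexivity. }
    apply (Ddiv (@qcls M C y, @qcls M C y) (@qcls M C y, @qcls M C y)
             _ _ _ _ (Drr _) E2); rewrite prod_mop, !(Q4 HC); reflexivity.
Qed.

End GoodS.
Arguments Good_gen {M C} HC ze D A _ g _.
Arguments Good_tors {M C} HC ze D RL Hz Hcore y z f _.

Definition ind (M : magma) (C : M -> M -> Prop) (g : M -> M) (p : quotM M C) : quotM M C :=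
  qcls M C (g (qrep p)).
Arguments ind {M} C g p.

Lemma ind_q (M : magma) (C : M -> M -> Prop) (HC : congruence M C) (ze : quotM M C -> quotM M C -> Prop) D g :
  Good ze D g -> forall x, ind C g (qcls M C x) = qcls M C (g x).
Proof.
  intros (R&_) x. unfold ind. apply (Q1 HC). apply (proj1 (R _ _)). apply (Q3 HC).
Qed.
Arguments ind_q {M C} HC {ze D g} _ x.

Lemma ind_good (M : magma) (C C' : M -> M -> Prop) (HC : congruence M C) (ze : quotM M C -> quotM M C -> Prop) D g
  (HC' : forall x y, C' x y <-> ze (qcls M C x) (qcls M C y)) :
  Good ze D g -> (forall x, C' x (g x)) -> cgood ze D (ind C g).
Proof.
  intros Gd Kg. pose proof Gd as (R&U&Z&Dd).
  refine (conj _ (conj _ (conj _ _))).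
  - rewrite Qunit, (ind_q HC Gd). apply (Q1 HC). exact U.
  - intros [p1 p2] [q1 q2] Hd. cbn [fst snd].
    destruct (qsurj p1) as [x1 ->]. destruct (qsurj p2) as [x2 ->].
    destruct (qsurj q1) as [y1 ->]. destruct (qsurj q2) as [y2 ->].
    rewrite !(ind_q HC Gd). apply (proj1 (Dd _ _ _ _)). exact Hd.
  - intros a Ha. destruct (qsurj a) as [a0 ->]. rewrite (ind_q HC Gd).
    apply (Q1 HC). apply Z. exact Ha.
  - intros p. destruct (qsurj p) as [x ->]. rewrite (ind_q HC Gd).
    apply HC'. apply Kg.
Qed.
Arguments ind_good {M C C'} HC {ze D g} HC' _ _.

Lemma key (S : magma) (RL : is_right_loop S) (C C' : S -> S -> Prop)
  (ze : quotM S C -> quotM S C -> Prop) (HC : congruence S C)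
  (Hcen : is_center_congruence (quotM S C) ze)
  (HC' : forall x y, C' x y <-> ze (qcls S C x) (qcls S C y))
  g h g' h' (Gg : group_torsion S g) (Gh : group_torsion S h)
  (Gg' : group_torsion S g') (Gh' : group_torsion S h')
  (Kg : forall x, C' x (g x)) (Kh : forall x, C' x (h x))
  (E1 : forall x, g' (g x) = x) (E2 : forall x, h' (h x) = x) :
  forall x, C x (g' (h' (g (h x)))).
Proof.
  destruct Hcen as [Hz [[D (Dc & Di & Dii & Diii & _)] _]].
  assert (Hcore : core_hyp (quotM S C) ze D).
  { pose proof RL as [Hid _].
    refine (conj _ (conj _ (conj Dc (conj _ _)))).
    - intro p. destruct (qsurj p) as [x ->].
      rewrite Qunit, (Q4 HC), (proj1 (Hid x)). reflexivity.
    - intro p. destruct (qsurj p) as [x ->].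
      rewrite Qunit, (Q4 HC), (proj2 (Hid x)). reflexivity.
    - intros x y Hxy. destruct (Dii x y Hxy) as [U Ex]. split; [exact U|].
      intro u. exact (Ex u I).
    - intros x y. exact (Diii x y I). }
  assert (Gd : forall f, group_torsion S f -> Good ze D f).
  { apply (Good_gen HC ze D). intros f (y & z & Ht).
    exact (Good_tors HC ze D RL Hz Hcore y z f Ht). }
  intro x.
  pose proof (c_comm Hcore (ind C g) (ind C h)
     (ind_good HC HC' (Gd g Gg) Kg) (ind_good HC HC' (Gd h Gh) Kh) (qcls S C x)) as E.
  rewrite !(ind_q HC (Gd _ Gh)), !(ind_q HC (Gd _ Gg)), !(ind_q HC (Gd _ Gh)) in E.
  apply (Q1 HC) in E.
  destruct (Gd h' Gh') as (Rh'&_). destruct (Gd g' Gg') as (Rg'&_).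
  apply (proj1 (Rh' _ _)) in E. rewrite E2 in E.
  apply (proj1 (Rg' _ _)) in E. rewrite E1 in E.
  apply (cg_sym HC). exact E.
Qed.

Lemma step_cong (M : magma) (C C' : M -> M -> Prop) (ze : quotM M C -> quotM M C -> Prop) :
  congruence M C -> congruence (quotM M C) ze ->
  (forall x y, C' x y <-> ze (qcls M C x) (qcls M C y)) -> congruence M C'.
Proof.
  intros HC Hz HC'.
  refine (conj _ (conj _ (conj _ (conj _ (conj _ (conj _ _)))))).
  - intros; split; exact I.
  - intros x _. apply HC'. apply (cg_refl Hz).
  - intros x y H. apply HC'. apply (cg_sym Hz). apply HC'. exact H.
  - intros x y z H1 H2. apply HC'. apply (cg_trans Hz _ (qcls M C y)); apply HC'; assumption.
  - apply HC'. apply (cg_refl Hz).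
  - intros a a' b b' H1 H2. apply HC'. rewrite <- !(Q4 HC).
    apply (cg_op Hz); apply HC'; assumption.
  - intros a a' b b' X X' H1 H2 E1 E2. apply HC'.
    apply (cg_div Hz (qcls M C a) (qcls M C a') (qcls M C b) (qcls M C b')).
    + apply HC'; exact H1.
    + apply HC'; exact H2.
    + rewrite (Q4 HC), E1. reflexivity.
    + rewrite (Q4 HC), E2. reflexivity.
Qed.

Lemma gen_sub (T : Type) (A B : (T -> T) -> Prop) :
  (forall f, A f -> gen_perm B f) -> forall f, gen_perm A f -> gen_perm B f.
Proof.
  intros HA f Hf. induction Hf.
  - auto.
  - apply gen_id.
  - apply gen_comp; auto.
  - eapply gen_inv; eauto.
Qed.

Theorem mainTheorem15 (S : magma) :
  is_right_loop S -> nilpotent S -> solvable_perm_group (group_torsion S).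
Proof.
  intros RL [n [alpha [zeta [H0 [Hs Ht]]]]].
  assert (Hcong : forall i, i <= n -> congruence S (alpha i)).
  { induction i as [|i IH]; intro Hi.
    - refine (conj _ (conj _ (conj _ (conj _ (conj _ (conj _ _)))))).
      + intros; split; exact I.
      + intros x _. apply H0. reflexivity.
      + intros x y H. apply H0. apply H0 in H. auto.
      + intros x y z H1 H2. apply H0. apply H0 in H1. apply H0 in H2. congruence.
      + apply H0. reflexivity.
      + intros a a' b b' H1 H2. apply H0. apply H0 in H1. apply H0 in H2. subst. reflexivity.
      + intros a a' b b' X X' H1 H2 E1 E2. apply H0. apply H0 in H1. apply H0 in H2.
        rewrite <- H1, <- H2 in E2.
        destruct RL as [_ RL2]. destruct (RL2 a b) as [X0 [_ U]].
        rewrite <- (U X E1). apply U. exact E2.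
    - assert (Hlt : i < n) by lia.
      destruct (Hs i Hlt) as [[Hzc _] Hiff].
      exact (step_cong S (alpha i) (alpha (Datatypes.S i)) (zeta i) (IH ltac:(lia)) Hzc Hiff). }
  assert (Main : forall k, k <= n -> forall g, derived (group_torsion S) k g ->
            group_torsion S g /\ forall x, alpha (n - k) x (g x)).
  { induction k as [|k IHk]; intros Hk g Hg.
    - split; [exact Hg|]. intro x. rewrite Nat.sub_0_r. apply Ht.
    - simpl in Hg. unfold commutator_subgroup in Hg.
      assert (Hj : n - k = Datatypes.S (n - Datatypes.S k)) by lia.
      assert (Hlt : n - Datatypes.S k < n) by lia.
      pose proof (Hcong (n - Datatypes.S k) ltac:(lia)) as HC.
      destruct (Hs (n - Datatypes.S k) Hlt) as [Hcen Hiff].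
      induction Hg as [f Hf| | f1 f2 _ IH1 _ IH2 | f1 f2 _ IH1 Ei1 Ei2].
      + destruct Hf as (g1 & h1 & g1' & h1' & Hg1 & Hh1 & Eg1 & Eg2 & Eh1 & Eh2 & ->).
        destruct (IHk ltac:(lia) g1 Hg1) as [Gg1 Kg1].
        destruct (IHk ltac:(lia) h1 Hh1) as [Gh1 Kh1].
        pose proof (gen_inv g1' Gg1 Eg1 Eg2) as Gg1'.
        pose proof (gen_inv h1' Gh1 Eh1 Eh2) as Gh1'.
        split.
        * exact (gen_comp Gg1' (gen_comp Gh1' (gen_comp Gg1 Gh1))).
        * rewrite Hj in Kg1, Kh1.
          exact (key S RL (alpha (n - Datatypes.S k)) (alpha (Datatypes.S (n - Datatypes.S k))) (zeta (n - Datatypes.S k)) HC Hcen Hiff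
                   g1 h1 g1' h1' Gg1 Gh1 Gg1' Gh1' Kg1 Kh1 Eg1 Eh1).
      + split; [apply gen_id|]. intro x. apply (cg_refl HC).
      + destruct IH1 as [G1 K1]. destruct IH2 as [G2 K2]. split.
        * apply gen_comp; assumption.
        * intro x. apply (cg_trans HC _ (f2 x)); auto.
      + destruct IH1 as [G1 K1]. split.
        * eapply gen_inv; eauto.
        * intro x. apply (cg_sym HC). rewrite <- (Ei2 x) at 2. apply K1. }
  exists n. intros g Hg x.
  destruct (Main n (le_n n) g Hg) as [_ Hk].
  rewrite Nat.sub_diag in Hk. symmetry. apply H0. apply Hk.
Qed.
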